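(* Let $\mathcal G$ be an ample groupoid and $S$ a semifield. If the Steinberg algebra $A_S(\mathcal G)$ is congruence-simple, then (1) $S$ is either a field or the Boolean semifield $\mathbb B$, and (2) $\mathcal G$ is both minimal and effective.
   Context: A semifield is a nontrivial commutative semiring (commutative monoid addition with $0$, commutative associative multiplication with $1$, distributivity, $0$ absorbing) in which every nonzero element has a multiplicative inverse. $\mathbb B=(\{0,1\},\text{or},\text{and})$. A congruence on a hemiring $R$ is an equivalence relation $\sim$ such that $r\sim s$ implies $t+r\sim t+s$, $tr\sim ts$, $rt\sim st$ for all $t$; $R$ is congruence-simple if its only congruences are $R\times R$ and the diagonal. An ample groupoid is a topological groupoid whose unit space $\mathcal G^{(0)}$ is locally compact Hausdorff and totally disconnected and whose source and range maps $s,r$ are local homeomorphisms ($\mathcal G$ need not be Hausdorff). A subset $D\subseteq\mathcal G^{(0)}$ is invariant if $s(\gamma)\in D$ implies $r(\gamma)\in D$ for all $\gamma$. $\mathcal G$ is minimal if $\mathcal G^{(0)}$ has no open invariant subsets other than $\varnothing$ and $\mathcal G^{(0)}$. $\mathcal G$ is effective if the interior of the isotropy subgroupoid $\operatorname{Iso}(\mathcal G)=\{\gamma: s(\gamma)=r(\gamma)\}$ equals $\mathcal G^{(0)}$. The Steinberg algebra $A_S(\mathcal G)$ is the set of functions $\mathcal G\to S$ of the form $\sum_{U\in F}s_U1_U$ with $F$ a finite set of compact open bisections (subsets on which $s,r$ are homeomorphisms onto their images), with pointwise addition and convolution $(f*g)(\gamma)=\sum_{\alpha\beta=\gamma}f(\alpha)g(\beta)$.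 *)

(* Defs.v *)
From HB Require Import structures.
From mathcomp Require Import all_boot all_order all_algebra.
From mathcomp Require Import all_classical all_reals all_analysis.
Set Implicit Arguments. Unset Strict Implicit. Unset Printing Implicit Defensive.
Import Order.TTheory GRing.Theory Num.Theory.
Local Open Scope classical_set_scope.
Local Open Scope ring_scope.

(* g * h is defined iff src g = rng h (the product of the paper: s(g)=r(h)).  *)
Record groupoid (T : Type) := Groupoid {
  src : T -> T;
  rng : T -> T;
  gmul : T -> T -> T;
  ginv : T -> T;
  src_src : forall g, src (src g) = src g;
  rng_src : forall g, rng (src g) = src g;
  src_rng : forall g, src (rng g) = rng g;
  rng_rng : forall g, rng (rng g) = rng g;
  src_gmul : forall g h, src g = rng h -> src (gmul g h) = src h;
  rng_gmul : forall g h, src g = rng h -> rng (gmul g h) = rng g;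
  gmulA : forall g h k, src g = rng h -> src h = rng k ->
    gmul (gmul g h) k = gmul g (gmul h k);
  gmul_src : forall g, gmul g (src g) = g;
  rng_gmul_l : forall g, gmul (rng g) g = g;
  src_ginv : forall g, src (ginv g) = rng g;
  rng_ginv : forall g, rng (ginv g) = src g;
  gmulVg : forall g, gmul (ginv g) g = src g;
  gmulgV : forall g, gmul g (ginv g) = rng g
}.

Section GroupoidDefs.
Context {T : topologicalType} (G : groupoid T).

Definition unit_space : set T := [set x | src G x = x].

Definition open_in (A B : set T) := exists O : set T, open O /\ B = O `&` A.

Definition homeo_onto_image (f : T -> T) (U : set T) :=
  {within U, continuous f} /\
  exists h : T -> T, (forall x, U x -> h (f x) = x) /\
                     {within f @` U, continuous h}.

Definition local_homeo (f : T -> T) :=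
  forall g, exists U : set T,
    [/\ open U, U g, open_in unit_space (f @` U) & homeo_onto_image f U].

Definition topological_groupoid :=
  {within [set p : T * T | src G p.1 = rng G p.2],
     continuous (fun p : T * T => gmul G p.1 p.2)} /\
  continuous (ginv G).

Definition units_hausdorff :=
  forall x y, unit_space x -> unit_space y -> x <> y ->
    exists U V : set T, [/\ open U, open V, U x, V y & (U `&` V `&` unit_space = set0)].

Definition units_locally_compact :=
  forall x, unit_space x -> exists (O K : set T),
    [/\ open O, O x, K `<=` unit_space, compact K & O `&` unit_space `<=` K].

Definition ample :=
  [/\ topological_groupoid, units_locally_compact, units_hausdorff,
      totally_disconnected unit_space & local_homeo (src G) /\ local_homeo (rng G)].

Definition invariant (D : set T) :=
  forall g, D (src G g) -> D (rng G g).

Definition minimal_groupoid :=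
  forall D, open_in unit_space D -> invariant D -> D = set0 \/ D = unit_space.

Definition isotropy : set T := [set g | src G g = rng G g].

Definition effective_groupoid := interior isotropy = unit_space.

Definition bisection (B : set T) :=
  homeo_onto_image (src G) B /\ homeo_onto_image (rng G) B.

Definition compact_open_bisection (B : set T) :=
  [/\ compact B, open B & bisection B].

Variable S : comNzSemiRingType.

Definition steinberg : set (T -> S) :=
  [set f | exists l : seq (S * set T),
     (forall p, p \in l -> compact_open_bisection p.2) /\
     f = (fun x => \sum_(p <- l) (if x \in p.2 then p.1 else 0))].

Definition sadd (f g : T -> S) : T -> S := fun x => f x + g x.

Definition steinberg_conv (f g : T -> S) : T -> S := fun x =>
  (\sum_(p \in [set p : T * T | src G p.1 = rng G p.2 /\ gmul G p.1 p.2 = x])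
      (f p.1 * g p.2))%R.

End GroupoidDefs.

Definition congruence {R : Type} (A : set R) (add mul : R -> R -> R)
    (E : R -> R -> Prop) :=
  [/\ (forall x y, E x y -> A x /\ A y),
      (forall x, A x -> E x x),
      (forall x y, E x y -> E y x),
      (forall x y z, E x y -> E y z -> E x z) &
      (forall r s t, A t -> E r s ->
         [/\ E (add t r) (add t s), E (mul t r) (mul t s) & E (mul r t) (mul s t)])].

Definition congruence_simple {R : Type} (A : set R) (add mul : R -> R -> R) :=
  forall E, congruence A add mul E ->
    (forall x y, A x -> A y -> E x y) \/ (forall x y, E x y -> x = y).

Definition semifield (S : comNzSemiRingType) :=
  forall x : S, x != 0 -> exists y, x * y = 1.

(* a semifield is a field iff it has additive inverses *)
Definition is_field_semiring (S : comNzSemiRingType) :=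
  forall x : S, exists y, x + y = 0.

Definition is_boolean_semifield (S : comNzSemiRingType) :=
  exists f : S -> bool, [/\ bijective f, f 0 = false, f 1 = true,
    (forall x y, f (x + y) = f x || f y) &
    (forall x y, f (x * y) = f x && f y)].

(* Main.v *)
Require Import Defs.
From HB Require Import structures.
From mathcomp Require Import all_boot all_order all_algebra.
From mathcomp Require Import all_classical all_reals all_analysis.
Set Implicit Arguments. Unset Strict Implicit. Unset Printing Implicit Defensive.
Import Order.TTheory GRing.Theory Num.Theory.
Local Open Scope classical_set_scope.
Local Open Scope ring_scope.

Definition wcont {T U : topologicalType} (A : set T) (f : T -> U) x :=
  forall W, nbhs (f x) W -> nbhs x (fun z => A z -> W (f z)).
Lemma nbhsS {T : topologicalType} (x : T) (P Q : set T) :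
  P `<=` Q -> nbhs x P -> nbhs x Q.
Proof. exact: filterS. Qed.
Lemma nbhsI {T : topologicalType} (x : T) (P Q : set T) :
  nbhs x P -> nbhs x Q -> nbhs x (P `&` Q).
Proof. exact: filterI. Qed.
Section Wc.
Context {T U V : topologicalType}.

Lemma withinP (A : set T) (f : T -> U) :
  {within A, continuous f} <-> forall x, A x -> wcont A f x.
Proof.
rewrite /from_subspace subspace_continuousP; split=> H x Ax.
  by move=> W Wn; have := H x Ax W Wn.
by move=> W Wn; apply: H.
Qed.

Lemma wcont_sub (A B : set T) (f : T -> U) x :
  B `<=` A -> wcont A f x -> wcont B f x.
Proof.
move=> BA H W /H; apply: filterS => z HA Bz; exact/HA/BA.
Qed.

Lemma wcont_glob (A : set T) (f : T -> U) x :
  {for x, continuous f} -> wcont A f x.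
Proof.
move=> H W Wn; have H1 := H W Wn; rewrite /= in H1.
have : nbhs x (f @^-1` W) by exact: H1.
by apply: filterS => z Wz _.
Qed.

Lemma wcont_comp (A : set T) (B : set U) (f : T -> U) (g : U -> V) x :
  wcont A f x -> wcont B g (f x) -> (forall z, A z -> B (f z)) ->
  wcont A (g \o f) x.
Proof.
move=> Hf Hg AB W /Hg /Hf H; apply: (filterS _ H) => z Hz Az /=.
exact: (Hz Az (AB _ Az)).
Qed.

Lemma nbhs_pair (a : T) (b : U) (W : set (T * U)) : nbhs (a,b) W ->
  exists P Q, [/\ nbhs a P, nbhs b Q & forall x y, P x -> Q y -> W (x,y)].
Proof.
move=> [[P Q] /= [HP HQ] H].
by exists P, Q; split=> // x y Px Qy; apply: (H (x,y)).
Qed.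
End Wc.

Section Grp.
Context {T : topologicalType} (G : groupoid T).
Local Notation s := (src G).
Local Notation r := (rng G).
Local Notation "a ** b" := (gmul G a b) (at level 40).
Local Notation X := (unit_space G).
Local Notation C2 := [set p : T * T | src G p.1 = rng G p.2].

Lemma s_unit g : X (s g). Proof. by rewrite /unit_space /= src_src. Qed.
Lemma r_unit g : X (r g). Proof. by rewrite /unit_space /= src_rng. Qed.

Lemma loc_cont (f : T -> T) : local_homeo G f -> continuous f.
Proof.
move=> H g; case: (H g) => U [oU Ug _ [cU _]].
move: cU; rewrite continuous_open_subspace // => cU; exact: (cU g (mem_set Ug)).
Qed.

Lemma X_open : local_homeo G s -> open X.
Proof.
move=> Hs; rewrite openE => x Xx; case: (Hs x) => U [oU Ux _ [cU [h [hU _]]]].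
have sc := loc_cont Hs.
have oN : open (U `&` s @^-1` U).
  apply: openI => //; by move/continuousP: sc; apply.
have : nbhs x (U `&` s @^-1` U).
  by apply: open_nbhs_nbhs; split => //; split => //; rewrite /= Xx.
apply: filterS => g [Ug Usg].
rewrite /unit_space /=; have := hU _ Usg; rewrite src_src hU //.
Qed.

Lemma open_in_X (B : set T) : local_homeo G s -> open_in X B -> open B.
Proof.
move=> Hs [V0 [oV0 ->]]; apply: openI => //; exact: X_open.
Qed.

Lemma wcont_mul (A : set T) (f1 f2 : T -> T) x :
  {within C2, continuous (fun p : T * T => p.1 ** p.2)} ->
  A x -> wcont A f1 x -> wcont A f2 x ->
  (forall z, A z -> s (f1 z) = r (f2 z)) ->
  wcont A (fun z => f1 z ** f2 z) x.
Proof.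
move=> /withinP Hm Ax H1 H2 Hc W Wn.
have := Hm (f1 x, f2 x) (Hc _ Ax) W Wn.
case/nbhs_pair => P [Q [HP HQ HPQ]].
apply: (nbhsS _ (nbhsI (H1 _ HP) (H2 _ HQ))) => z [Pz Qz] Az.
exact: (HPQ _ _ (Pz Az) (Qz Az) (Hc _ Az)).
Qed.
End Grp.

Section ZD.
Context {T : topologicalType} (X : set T).
Hypothesis hX : open X.
Hypothesis haus : forall x y, X x -> X y -> x <> y ->
  exists U V : set T, [/\ open U, open V, U x, V y & U `&` V `&` X = set0].

Lemma dir_cover (K : set T) (O : set (set T)) : compact K ->
  (exists A, O A) -> (forall A B, O A -> O B -> O (A `|` B)) ->
  (forall y, K y -> exists2 A, O A & nbhs y A) -> exists2 A, O A & K `<=` A.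
Proof.
move=> cK [A0 OA0] OU cov.
apply: contrapT => H.
have nK : forall A, O A -> ~ K `<=` A by move=> A OA KA; apply: H; exists A.
pose F := filter_from O (fun A => K `\` A).
have FF : Filter F.
  apply: filter_from_filter; first by exists A0.
  move=> A B OA OB; exists (A `|` B); first exact: OU.
  by move=> y [Ky nAB]; split; split => // ?; apply: nAB; [left|right].
have PF : ProperFilter F.
  apply: filter_from_proper => A OA.
  case: (pselect (exists y, K y /\ ~ A y)) => [[y [Ky nAy]]|nE]; first by exists y.
  exfalso; apply: (nK A OA) => y Ky; apply: contrapT => nAy; apply: nE; by exists y.
have FK : F K by exists A0 => // y [].
case: (cK F PF FK) => p [Kp clp].
case: (cov p Kp) => A OA nA.
have FA : F (K `\` A) by exists A.
by case: (clp _ _ FA nA) => z [[_ nAz] Az].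
Qed.

Lemma set0P3 (A B C : set T) z : A `&` B `&` C = set0 -> A z -> B z -> C z -> False.
Proof. by move=> H Az Bz Cz; have : (A `&` B `&` C) z by []; rewrite H. Qed.

Lemma sep_pt (A2 : set T) a : compact A2 -> A2 `<=` X -> X a -> ~ A2 a ->
  exists U V, [/\ open U, open V, U a, A2 `<=` V & U `&` V `&` X = set0].
Proof.
move=> cA2 A2X Xa nA2a.
pose O := [set V : set T | open V /\ exists U, [/\ open U, U a & U `&` V `&` X = set0]].
have [] := @dir_cover A2 O cA2.
- exists set0; split; first exact: open0.
  by exists setT; split => //; [exact: openT| rewrite setI0 set0I].
- move=> A B [oA [U1 [oU1 U1a H1]]] [oB [U2 [oU2 U2a H2]]]; split; first exact: openU.
  exists (U1 `&` U2); split => //; first exact: openI.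
  rewrite -subset0 => z [[[U1z U2z] [Az|Bz]] Xz].
  + exact: (set0P3 H1 U1z Az Xz).
  + exact: (set0P3 H2 U2z Bz Xz).
- move=> b A2b; have Xb := A2X _ A2b.
  have ab : a <> b by move=> ab; apply: nA2a; rewrite ab.
  case: (haus Xa Xb ab) => U [V [oU oV Ua Vb H]].
  exists V; first by split => //; exists U.
  by apply: open_nbhs_nbhs; split.
- move=> V [oV [U [oU Ua H]]] A2V; by exists U, V.
Qed.

Lemma sep (A1 A2 : set T) : compact A1 -> compact A2 -> A1 `<=` X -> A2 `<=` X ->
  A1 `&` A2 = set0 ->
  exists U V, [/\ open U, open V, A1 `<=` U, A2 `<=` V & U `&` V `&` X = set0].
Proof.
move=> cA1 cA2 A1X A2X H0.
pose O := [set U : set T | open U /\ exists V, [/\ open V, A2 `<=` V & U `&` V `&` X = set0]].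
have [] := @dir_cover A1 O cA1.
- exists set0; split; first exact: open0.
  by exists setT; split => //; [exact: openT| rewrite set0I !set0I].
- move=> A B [oA [V1 [oV1 V1a H1]]] [oB [V2 [oV2 V2a H2]]]; split; first exact: openU.
  exists (V1 `&` V2); split => //; first exact: openI.
    by move=> z A2z; split; [apply: V1a|apply: V2a].
  rewrite -subset0 => z [[[Az|Bz] [V1z V2z]] Xz].
  + exact: (set0P3 H1 Az V1z Xz).
  + exact: (set0P3 H2 Bz V2z Xz).
- move=> a A1a; have Xa := A1X _ A1a.
  have nA2a : ~ A2 a by move=> A2a; have : (A1 `&` A2) a by []; rewrite H0.
  case: (sep_pt cA2 A2X Xa nA2a) => U [V [oU oV Ua A2V H]].
  exists U; first by split => //; exists V.
  by apply: open_nbhs_nbhs; split.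
- move=> U [oU [V [oV A2V H]]] A1U; by exists U, V.
Qed.


Lemma compactI_X (K1 K2 : set T) : compact K1 -> compact K2 -> K1 `<=` X ->
  K2 `<=` X -> compact (K1 `&` K2).
Proof.
rewrite !compact_ultra => c1 c2 K1X K2X F UF FK.
have FK1 : F K1 by apply: filterS FK => z [].
have FK2 : F K2 by apply: filterS FK => z [].
case: (c1 F UF FK1) => p [K1p Fp]; case: (c2 F UF FK2) => q [K2q Fq].
have FX : F X by apply: filterS FK1.
case: (pselect (p = q)) => [pq|npq].
  by exists p; split => //; split => //; rewrite pq.
have Xp := K1X _ K1p; have Xq := K2X _ K2q.
case: (haus Xp Xq npq) => U [V [oU oV Up Vq H]].
have FU : F U by apply: Fp; apply: open_nbhs_nbhs; split.
have FV : F V by apply: Fq; apply: open_nbhs_nbhs; split.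
have : F (U `&` V `&` X) by apply: filterI => //; apply: filterI.
rewrite H => F0; exfalso; exact: (@filter_not_empty _ F _ F0).
Qed.

Hypothesis lc : forall x, X x -> exists O K : set T,
    [/\ open O, O x, K `<=` X, compact K & O `&` X `<=` K].
Hypothesis td : totally_disconnected X.

Lemma zero_dim x W : X x -> open W -> W x ->
  exists C, [/\ compact C, open C, C x, C `<=` W & C `<=` X].
Proof.
move=> Xx oW Wx.
case: (lc Xx) => O [K0 [oO Ox K0X cK0 OK0]].
have K0x : K0 x by apply: OK0.
pose CC := [set C : set T | [/\ C x, (exists2 U, open U & C = K0 `&` U)
                              & (exists2 F, closed F & C = K0 `&` F)]].
pose Q := K0 `&` \bigcap_(C in CC) closure C.
have CK0 : forall C, CC C -> C `<=` K0 by move=> C [_ [U _ ->] _] z [].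
have QC : forall C, CC C -> Q `<=` C.
  move=> C CCC y [K0y Hy]; have cly := Hy _ CCC.
  case: CCC => _ _ [F cF CE]; rewrite CE in cly *; split => //.
  apply: cF; apply: (closureS _ cly); by move=> ? [].
have CCI : forall C D, CC C -> CC D -> CC (C `&` D).
  move=> C D [Cx [U oU CU] [F cF CF]] [Dx [V oV DV] [F' cF' DF]]; split.
  - by split.
  - exists (U `&` V); first exact: openI.
    by rewrite CU DV setIACA setIid.
  - exists (F `&` F'); first exact: closedI.
    by rewrite CF DF setIACA setIid.
have CCK0 : CC K0.
  split => //; [exists setT; [exact: openT|by rewrite setIT]
               |exists setT; [exact: closedT|by rewrite setIT]].
have cQ : compact Q.
  apply: compact_closedI => //; apply: closed_bigI => C _; exact: closed_closure.
have Qx : Q x by split => // C CCC; apply: subset_closure; case: CCC.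
have QK0 : Q `<=` K0 by move=> z [].
have excl : forall K, compact K -> K `<=` K0 -> K `&` Q = set0 ->
    exists2 C, CC C & C `&` K = set0.
  move=> K cK KK0 KQ.
  have [] := @dir_cover K [set A | exists2 C, CC C & A = ~` C] cK.
  - by exists (~` K0); exists K0.
  - move=> A B [C CCC ->] [D CCD ->]; exists (C `&` D); [exact: CCI| by rewrite setCI].
  - move=> y Ky.
    have nQy : ~ Q y by move=> Qy; have : (K `&` Q) y by []; rewrite KQ.
    have : ~ (forall C, CC C -> closure C y).
      by move=> H; apply: nQy; split => //; apply: KK0.
    move=> /existsNP [C /not_implyP [CCC ncl]].
    exists (~` C); first by exists C.
    have : nbhs y (~` closure C).
      apply: open_nbhs_nbhs; split => //; apply: closed_openC; exact: closed_closure.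
    by apply: nbhsS => z nclz Cz; apply: nclz; exact: subset_closure.
  - move=> A [C CCC ->] KC; exists C => //.
    by rewrite -subset0 => z [Cz Kz]; exact: (KC z Kz Cz).
clearbody Q.
have key : forall B : set T, B x -> (exists2 U, open U & B = Q `&` U) ->
    (exists2 F, closed F & B = Q `&` F) -> B = Q.
  move=> B Bx [U oU BU] [F cF BF].
  pose A1 := Q `&` F; pose A2 := Q `&` ~` U.
  have cA1 : compact A1 by apply: compact_closedI.
  have cA2 : compact A2 by apply: compact_closedI => //; exact: open_closedC.
  have A1X : A1 `<=` X by move=> z [/QK0 /K0X].
  have A2X : A2 `<=` X by move=> z [/QK0 /K0X].
  have A12 : A1 `&` A2 = set0.
    rewrite -subset0 => z [[Qz Fz] [_ nUz]].
    have : B z by rewrite BF.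
    by rewrite BU => -[].
  case: (sep cA1 cA2 A1X A2X A12) => U1 [V1 [oU1 oV1 A1U1 A2V1 H1]].
  pose K := K0 `&` ~` (U1 `|` V1).
  have cK : compact K by apply: compact_closedI => //; apply: open_closedC; exact: openU.
  have KQ : K `&` Q = set0.
    rewrite -subset0 => z [[_ nUV] Qz]; apply: nUV.
    case: (pselect (U z)) => Uz.
      have Bz : B z by rewrite BU.
      have [_ Fz] : (Q `&` F) z by move: Bz; rewrite BF.
      by left; apply: A1U1.
    by right; apply: A2V1.
  case: (excl K cK (fun z => @proj1 _ _) KQ) => C CCC CK.
  have CUV : C `<=` U1 `|` V1.
    move=> z Cz; apply: contrapT => nUV.
    have : (C `&` K) z by split => //; split; [exact: (CK0 _ CCC _ Cz)|].
    by rewrite CK.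
  have CC' : CC (C `&` U1).
    case: CCC => Cx [Uc oUc CUc] [Fc cFc CFc]; split.
    - have [_ Fx] : (Q `&` F) x by move: Bx; rewrite BF.
      split => //; apply: A1U1; split => //.
    - exists (Uc `&` U1); first exact: openI.
      by rewrite CUc setIA.
    - exists (Fc `&` ~` V1); first by apply: closedI => //; exact: open_closedC.
      apply/seteqP; split => z.
        move=> [Cz U1z]; have := Cz; rewrite {1}CFc => -[K0z Fcz].
        split => //; split => // V1z; exact: (set0P3 H1 U1z V1z (K0X _ K0z)).
      move=> [K0z [Fcz nV1z]].
      have Cz : C z by rewrite CFc.
      by split => //; case: (CUV _ Cz).
  have QU1 : Q `<=` U1 by move=> z /(QC _ CC') [].
  have A20 : A2 = set0.
    rewrite -subset0 => z A2z.
    exact: (set0P3 H1 (QU1 _ (proj1 A2z)) (A2V1 _ A2z) (A2X _ A2z)).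
  rewrite BU; apply/seteqP; split; first by move=> z [].
  move=> z Qz; split => //; apply: contrapT => nUz.
  by have : A2 z by []; rewrite A20.
have Qconn : connected Q.
  move=> B [b Bb] [U oU BU] [F cF BF].
  case: (pselect (B x)) => Bx.
    by apply: key => //; [exists U|exists F].
  have E : Q `&` ~` F = Q.
    apply: key.
    - split => // Fx; apply: Bx; rewrite BF; by split.
    - by exists (~` F); [exact: closed_openC|].
    - exists (~` U); first exact: open_closedC.
      apply/seteqP; split => z [Qz nz]; split => // Hz; apply: nz.
      + have Bz : B z by rewrite BU.
        by have [_ Fz] : (Q `&` F) z by move: Bz; rewrite BF.
      + have Bz : B z by rewrite BF.
        by have [_ Uz] : (Q `&` U) z by move: Bz; rewrite BU.
  exfalso; have [Qb Fb] : (Q `&` F) b by move: Bb; rewrite BF.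
  have : (Q `&` ~` F) b by rewrite E.
  by case.
have : Q `<=` connected_component X x.
  by apply: connected_component_max => //; move=> z /QK0 /K0X.
rewrite td // => Qsub.
pose K := K0 `&` ~` (O `&` W).
have cK : compact K by apply: compact_closedI => //; apply: open_closedC; exact: openI.
have KQ : K `&` Q = set0.
  rewrite -subset0 => z [[_ nOW] /Qsub zx]; apply: nOW; rewrite zx; by split.
case: (excl K cK (fun z => @proj1 _ _) KQ) => C CCC CK.
have COW : C `<=` O `&` W.
  move=> z Cz; apply: contrapT => nOW.
  have : (C `&` K) z by split => //; split; [exact: (CK0 _ CCC _ Cz)|].
  by rewrite CK.
case: CCC => Cx [Uc oUc CUc] [Fc cFc CFc].
exists C; split => //.
- by rewrite CFc; apply: compact_closedI.
- have -> : C = (O `&` X) `&` (W `&` Uc).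
    apply/seteqP; split => z.
      move=> Cz; have [Oz Wz] := COW _ Cz; have := Cz; rewrite {1}CUc => -[K0z Ucz].
      by split; split => //; apply: K0X.
    move=> [[Oz Xz] [Wz Ucz]]; rewrite CUc; split => //; exact: OK0.
  by apply: openI; apply: openI.
- by move=> z /COW [].
- move=> z Cz; have := Cz; rewrite {1}CUc => -[K0z _]; exact: K0X.
Qed.

End ZD.

Section Bis.
Context {T : topologicalType} (G : groupoid T).
Local Notation s := (src G).
Local Notation r := (rng G).
Local Notation "a ** b" := (gmul G a b) (at level 40).
Local Notation X := (unit_space G).
Local Notation C2 := [set p : T * T | src G p.1 = rng G p.2].

Lemma gVmulK a b : s a = r b -> ginv G a ** (a ** b) = b.
Proof.
move=> ab; rewrite -gmulA; last by [].
  by rewrite gmulVg ab rng_gmul_l.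
by rewrite src_ginv.
Qed.

Lemma mulgVK a b : s a = r b -> (a ** b) ** ginv G b = a.
Proof.
move=> ab; rewrite gmulA //; last by rewrite rng_ginv.
by rewrite gmulgV -ab gmul_src.
Qed.

Lemma mulVgK a x : r a = r x -> a ** (ginv G a ** x) = x.
Proof.
move=> ax; rewrite -gmulA.
- by rewrite gmulgV ax rng_gmul_l.
- by rewrite rng_ginv.
- by rewrite src_ginv.
Qed.

Lemma homeo_inv (f h : T -> T) (U : set T) :
  (forall x, U x -> h (f x) = x) -> forall y, (f @` U) y -> U (h y) /\ f (h y) = y.
Proof. by move=> hU y [u Uu <-]; rewrite hU. Qed.

Definition bprod (U V : set T) :=
  [set x | exists a b, [/\ U a, V b, s a = r b & x = a ** b]].

Definition invdata (f : T -> T) (U : set T) (h : T -> T) :=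
  (forall x, U x -> h (f x) = x) /\ (forall y, (f @` U) y -> wcont (f @` U) h y).

Lemma cob_unpack B : compact_open_bisection G B ->
  [/\ compact B, open B, exists hs, invdata s B hs & exists hr, invdata r B hr].
Proof.
case=> cB oB [[_ [hs [hsB hsc]]] [_ [hr [hrB hrc]]]]; split => //.
  by exists hs; split => //; move/withinP: hsc.
by exists hr; split => //; move/withinP: hrc.
Qed.

Lemma cob_pack B : compact B -> open B -> continuous s -> continuous r ->
  (exists hs, invdata s B hs) -> (exists hr, invdata r B hr) ->
  compact_open_bisection G B.
Proof.
move=> cB oB sc rc [hs [hsB hsc]] [hr [hrB hrc]]; split => //; split.
  split; first exact: continuous_subspaceT.
  by exists hs; split => //; apply/withinP.
split; first exact: continuous_subspaceT.
by exists hr; split => //; apply/withinP.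
Qed.

Hypothesis Hs : local_homeo G s.
Hypothesis Hr : local_homeo G r.
Hypothesis Hmul : {within C2, continuous (fun p : T * T => gmul G p.1 p.2)}.
Hypothesis Hinv : continuous (ginv G).
Hypothesis Hhaus : units_hausdorff G.
Hypothesis Hlc : units_locally_compact G.
Hypothesis Htd : totally_disconnected X.

Let sc : continuous s := loc_cont Hs.
Let rc : continuous r := loc_cont Hr.
Let oX : open X := X_open Hs.

Lemma loc_open (f : T -> T) (B : set T) : local_homeo G f -> open B -> open (f @` B).
Proof.
move=> Hf oB; rewrite openE => y0 [b0 Bb0 <-].
case: (Hf b0) => U [oU Ub0 oiU [_ [h [hU hc]]]].
have ofU : open (f @` U) by apply: open_in_X Hs oiU.
have fUb0 : (f @` U) (f b0) by exists b0.
have := (proj1 (withinP _ _) hc) _ fUb0 B.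
rewrite hU // => /(_ (open_nbhs_nbhs (conj oB Bb0))) H1.
have H2 : nbhs (f b0) (f @` U) by apply: open_nbhs_nbhs.
apply: (nbhsS _ (nbhsI H1 H2)) => y [Hy fUy].
have [_ E] := homeo_inv hU fUy.
by exists (h y); [apply: Hy|].
Qed.

Lemma prod_cob U V : compact_open_bisection G U -> compact_open_bisection G V ->
  compact_open_bisection G (bprod U V).
Proof.
move=> /cob_unpack [cU oU [hUs [hUsU hUsc]] [hUr [hUrU hUrc]]].
move=> /cob_unpack [cV oV [hVs [hVsV hVsc]] [hVr [hVrV hVrc]]].
have wid : forall (A : set T) x, wcont A id x.
  by move=> A x; apply: wcont_glob; exact: cvg_id.
apply: cob_pack => //.
- pose K := (s @` U) `&` (r @` V).
  have cK : compact K.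
    apply: (compactI_X Hhaus).
    + by apply: continuous_compact => //; exact: continuous_subspaceT.
    + by apply: continuous_compact => //; exact: continuous_subspaceT.
    + by move=> z [a _ <-]; exact: s_unit.
    + by move=> z [a _ <-]; exact: r_unit.
  have -> : bprod U V = (fun y => hUs y ** hVr y) @` K.
    apply/seteqP; split.
    + move=> x [a [b [Ua Vb ab ->]]]; exists (s a).
        by split; [exists a|rewrite ab; exists b].
      by rewrite hUsU // ab hVrV.
    + move=> x [y [[a Ua <-] [b Vb yb]] <-].
      exists (hUs (s a)), (hVr (s a)); rewrite hUsU // -yb hVrV //.
  apply: continuous_compact cK; apply/withinP => y Ky.
  apply: (wcont_mul Hmul) => //.
  + by apply: (wcont_sub (A := s @` U)); [move=> z []|apply: hUsc; case: Ky].
  + by apply: (wcont_sub (A := r @` V)); [move=> z []|apply: hVrc; case: Ky].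
  + move=> z [Uz Vz]; have [_ ->] := homeo_inv hUsU Uz.
    by have [_ ->] := homeo_inv hVrV Vz.
- rewrite openE => x0 [a0 [b0 [Ua0 Vb0 ab0 ->]]].
  pose A0 := [set z | (r @` U) (r z)].
  pose psi := fun z => ginv G (hUr (r z)) ** z.
  have A0x : A0 (a0 ** b0) by exists a0 => //; rewrite rng_gmul.
  have A0h : forall z, A0 z -> U (hUr (r z)) /\ r (hUr (r z)) = r z.
    by move=> z Az; apply: homeo_inv.
  have wpsi : wcont A0 psi (a0 ** b0).
    apply: (wcont_mul Hmul) => //.
    + have w1 : wcont A0 (fun z => hUr (r z)) (a0 ** b0).
        apply: (wcont_comp (f := r) (g := hUr) (B := r @` U)) => //.
          by apply: wcont_glob; exact: rc.
        by apply: hUrc.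
      apply: (wcont_comp (f := fun z => hUr (r z)) (g := ginv G) (B := setT)) => //.
      by apply: wcont_glob; exact: Hinv.
    + by move=> z Az; rewrite src_ginv; case: (A0h z Az).
  have psix : psi (a0 ** b0) = b0.
    by rewrite /psi rng_gmul // hUrU // gVmulK.
  have H1 := wpsi V; rewrite psix in H1.
  have {}H1 := H1 (open_nbhs_nbhs (conj oV Vb0)).
  have H2 : nbhs (a0 ** b0) A0.
    apply: open_nbhs_nbhs; split => //.
    move/continuousP: rc; apply.
    exact: loc_open Hr oU.
  apply: (nbhsS _ (nbhsI H1 H2)) => z [Hz A0z].
  have [Ua ra] := A0h z A0z.
  exists (hUr (r z)), (psi z); split => //.
  + exact: Hz.
  + by rewrite /psi rng_gmul ?rng_ginv // src_ginv.
  + by rewrite /psi mulVgK.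
- exists (fun y => hUs (r (hVs y)) ** hVs y); split.
  + move=> x [a [b [Ua Vb ab ->]]].
    by rewrite src_gmul // hVsV // -ab hUsU.
  + have dec : forall z, (s @` bprod U V) z -> (s @` U) (r (hVs z)) /\ (s @` V) z.
      move=> z [x [a [b [Ua Vb ab ->]]] <-]; rewrite src_gmul // hVsV //.
      by split; [exists a|exists b].
    move=> y Hy; apply: (wcont_mul Hmul) => //.
    * apply: (wcont_comp (f := fun z => r (hVs z)) (g := hUs) (B := s @` U)).
      - apply: (wcont_comp (f := hVs) (g := r) (B := setT)) => //.
          by apply: (wcont_sub (A := s @` V)); [move=> z /dec []|apply: hVsc; case: (dec _ Hy)].
        by apply: wcont_glob; exact: rc.
      - by apply: hUsc; case: (dec _ Hy).
      - by move=> z /dec [].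
    * by apply: (wcont_sub (A := s @` V)); [move=> z /dec []|apply: hVsc; case: (dec _ Hy)].
    * move=> z /dec [H _]; by have [_ ->] := homeo_inv hUsU H.
- exists (fun y => hUr y ** hVr (s (hUr y))); split.
  + move=> x [a [b [Ua Vb ab ->]]].
    by rewrite rng_gmul // hUrU // ab hVrV.
  + have dec : forall z, (r @` bprod U V) z -> (r @` V) (s (hUr z)) /\ (r @` U) z.
      move=> z [x [a [b [Ua Vb ab ->]]] <-]; rewrite rng_gmul // hUrU //.
      by split; [exists b|exists a].
    move=> y Hy; apply: (wcont_mul Hmul) => //.
    * by apply: (wcont_sub (A := r @` U)); [move=> z /dec []|apply: hUrc; case: (dec _ Hy)].
    * apply: (wcont_comp (f := fun z => s (hUr z)) (g := hVr) (B := r @` V)).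
      - apply: (wcont_comp (f := hUr) (g := s) (B := setT)) => //.
          by apply: (wcont_sub (A := r @` U)); [move=> z /dec []|apply: hUrc; case: (dec _ Hy)].
        by apply: wcont_glob; exact: sc.
      - by apply: hVrc; case: (dec _ Hy).
      - by move=> z /dec [].
    * by move=> z /dec [H1 H2]; have [_ ->] := homeo_inv hVrV H1.
Qed.

Lemma unit_r x : X x -> r x = x.
Proof. by move=> Xx; rewrite -Xx rng_src. Qed.

Lemma unit_cob x W : X x -> open W -> W x ->
  exists C, [/\ compact_open_bisection G C, C x, C `<=` W & C `<=` X].
Proof.
move=> Xx oW Wx.
case: (zero_dim oX Hhaus Hlc Htd Xx oW Wx) => C [cC oC Cx CW CX].
exists C; split => //; apply: cob_pack => //.
- exists id; split; first by move=> z /CX.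
  by move=> y _; apply: wcont_glob; exact: cvg_id.
- exists id; split; first by move=> z /CX /unit_r.
  by move=> y _; apply: wcont_glob; exact: cvg_id.
Qed.

Lemma iso_cob g0 : interior (isotropy G) g0 ->
  exists B C, [/\ compact_open_bisection G B, compact_open_bisection G C, B g0,
    B `<=` isotropy G & C `<=` X /\ s @` B = C].
Proof.
move=> Ig0.
case: (Hs g0) => Us [oUs Usg0 oiUs [_ [hs [hsU hsc]]]].
case: (Hr g0) => Ur [oUr Urg0 oiUr [_ [hr [hrU hrc]]]].
move/withinP: hsc => hsc; move/withinP: hrc => hrc.
pose W := Us `&` Ur `&` interior (isotropy G).
have oW : open W by apply: openI; [apply: openI|exact: open_interior].
have Wg0 : W g0 by [].
have osW : open (s @` W) by apply: loc_open.
have [C [cC oC Cx CW CX]] := zero_dim oX Hhaus Hlc Htd (s_unit G g0) osW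
   (ex_intro2 _ _ g0 Wg0 erefl).
have WUs : W `<=` Us by move=> z [[]].
have Ch : forall y, C y -> W (hs y) /\ s (hs y) = y.
  by move=> y /CW [w Ww <-]; rewrite hsU //; apply: WUs.
pose B := hs @` C.
have BW : B `<=` W by move=> b [y /Ch [] ? _ <-].
have sB : s @` B = C.
  apply/seteqP; split; first by move=> y [b [y' Cy' <-] <-]; have [_ E] := Ch _ Cy'; rewrite E.
  by move=> y Cy; exists (hs y); [exists y|case: (Ch _ Cy)].
have CsUs : C `<=` s @` Us by move=> y /Ch [Wy <-]; exists (hs y) => //; apply: WUs.
exists B, C; split => //.
- apply: cob_pack => //.
  + apply: continuous_compact cC; apply/withinP => y Cy.
    exact: (wcont_sub CsUs (hsc _ (CsUs _ Cy))).
  + have -> : B = W `&` s @^-1` C.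
      apply/seteqP; split.
        by move=> b Bb; split; [apply: BW|case: Bb => y Cy <-; have [_ E] := Ch _ Cy; by rewrite /preimage /= E].
      move=> w [Ww Cw]; exists (s w) => //; rewrite hsU //; exact: WUs.
    by apply: openI => //; move/continuousP: sc; apply.
  + exists hs; split; first by move=> b /BW /WUs /hsU.
    by move=> y; rewrite sB => Cy; exact: (wcont_sub CsUs (hsc _ (CsUs _ Cy))).
  + have BUr : B `<=` Ur by move=> b /BW [[]].
    have rsub : r @` B `<=` r @` Ur by move=> y [b Bb <-]; exists b => //; apply: BUr.
    exists hr; split; first by move=> b /BUr /hrU.
    by move=> y Hy; exact: (wcont_sub rsub (hrc _ (rsub _ Hy))).
- apply: cob_pack => //.
  + exists id; split; first by move=> z /CX.
    by move=> y _; apply: wcont_glob; exact: cvg_id.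
  + exists id; split; first by move=> z /CX /unit_r.
    by move=> y _; apply: wcont_glob; exact: cvg_id.
- by exists (s g0) => //; rewrite hsU.
- by move=> b /BW [_ /interior_subset].
Qed.

End Bis.

Section FS.
Variable S : comNzSemiRingType.

Lemma mul_ne0r' (a b : S) : a * b != 0 -> b != 0.
Proof. by apply: contra => /eqP ->; rewrite mulr0. Qed.
Lemma mul_ne0l' (a b : S) : a * b != 0 -> a != 0.
Proof. by apply: contra => /eqP ->; rewrite mul0r. Qed.

Lemma subsing_fin (J : Type) (Z : set J) :
  (forall a b, Z a -> Z b -> a = b) -> finite_set Z.
Proof.
move=> H; case: (pselect (exists a, Z a)) => [[a Za]|nZ].
  by apply: (@sub_finite_set _ _ [set a]); [move=> b Zb; exact: H|exact: finite_set1].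
have -> : Z = set0 by apply/seteqP; split => // b Zb; apply: nZ; exists b.
exact: finite_set0.
Qed.

Lemma fsbig_sumseq (I : eqType) (J : choiceType) (P D : set J) (l : seq I)
    (F : I -> J -> S) :
  finite_set D -> (forall i j, i \in l -> P j -> F i j != 0 -> D j) ->
  \sum_(j \in P) \sum_(i <- l) F i j = \sum_(i <- l) \sum_(j \in P) F i j.
Proof.
move=> fD sD.
have fPD : finite_set (P `&` D) by apply: finite_setIr.
have E1 : \sum_(j \in P) \sum_(i <- l) F i j = \sum_(j \in P `&` D) \sum_(i <- l) F i j.
  apply/esym/fsbig_widen; first by move=> j [].
  move=> j [Pj nPDj]; rewrite /preimage /=; apply: big1_seq => i /andP [_ il].
  apply/eqP; apply: contrapT => /negP Fij; apply: nPDj; split => //; exact: (sD i).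
have E2 : forall i, i \in l -> \sum_(j \in P) F i j = \sum_(j \in P `&` D) F i j.
  move=> i il; apply/esym/fsbig_widen; first by move=> j [].
  move=> j [Pj nPDj]; rewrite /preimage /=.
  apply/eqP; apply: contrapT => /negP Fij; apply: nPDj; split => //; exact: (sD i).
rewrite E1 (eq_big_seq _ E2) fsbig_finite //.
under [RHS]eq_bigr do rewrite fsbig_finite //.
exact: exchange_big.
Qed.
Lemma fsbig_restrict (J : choiceType) (P D : set J) (F : J -> S) :
  (forall j, P j -> F j != 0 -> D j) ->
  \sum_(j \in P) F j = \sum_(j \in P `&` D) F j.
Proof.
move=> sD; apply/esym/fsbig_widen; first by move=> j [].
move=> j [Pj nPDj]; rewrite /preimage /=.
apply/eqP; apply: contrapT => /negP Fj; apply: nPDj; split => //; exact: sD.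
Qed.

Lemma fsbig_add (J : choiceType) (P D : set J) (F1 F2 : J -> S) :
  finite_set D -> (forall j, P j -> F1 j != 0 -> D j) ->
  (forall j, P j -> F2 j != 0 -> D j) ->
  \sum_(j \in P) (F1 j + F2 j) = \sum_(j \in P) F1 j + \sum_(j \in P) F2 j.
Proof.
move=> fD s1 s2.
have fPD : finite_set (P `&` D) by apply: finite_setIr.
have E1 : \sum_(j \in P) F1 j = \sum_(j \in P `&` D) F1 j by apply: fsbig_restrict.
have E2 : \sum_(j \in P) F2 j = \sum_(j \in P `&` D) F2 j by apply: fsbig_restrict.
have E3 : \sum_(j \in P) (F1 j + F2 j) = \sum_(j \in P `&` D) (F1 j + F2 j).
  apply: fsbig_restrict => j Pj H; case: (boolP (F1 j == 0)) => [/eqP e|]; last exact: s1.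
  by apply: s2 => //; move: H; rewrite e add0r.
by rewrite E1 E2 E3 !fsbig_finite // big_split.
Qed.

Lemma fsbig_mull (J : choiceType) (P D : set J) (c : S) (F : J -> S) :
  finite_set D -> (forall j, P j -> F j != 0 -> D j) ->
  \sum_(j \in P) (c * F j) = c * \sum_(j \in P) F j.
Proof.
move=> fD sD.
have fPD : finite_set (P `&` D) by apply: finite_setIr.
have E1 : \sum_(j \in P) (c * F j) = \sum_(j \in P `&` D) (c * F j).
  by apply: fsbig_restrict => j Pj /mul_ne0r' /sD; apply.
have E2 : \sum_(j \in P) F j = \sum_(j \in P `&` D) F j by apply: fsbig_restrict.
by rewrite E1 E2 !fsbig_finite // mulr_sumr.
Qed.

Lemma fsbig_mulr (J : choiceType) (P D : set J) (c : S) (F : J -> S) :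
  finite_set D -> (forall j, P j -> F j != 0 -> D j) ->
  \sum_(j \in P) (F j * c) = (\sum_(j \in P) F j) * c.
Proof.
move=> fD sD.
have fPD : finite_set (P `&` D) by apply: finite_setIr.
have E1 : \sum_(j \in P) (F j * c) = \sum_(j \in P `&` D) (F j * c).
  by apply: fsbig_restrict => j Pj /mul_ne0l' /sD; apply.
have E2 : \sum_(j \in P) F j = \sum_(j \in P `&` D) F j by apply: fsbig_restrict.
by rewrite E1 E2 !fsbig_finite // mulr_suml.
Qed.
End FS.

Section Alg.
Context {T : topologicalType} (G : groupoid T) (S : comNzSemiRingType).
Local Notation s := (src G).
Local Notation r := (rng G).
Local Notation "a ** b" := (gmul G a b) (at level 40).
Local Notation X := (unit_space G).
Local Notation conv := (@steinberg_conv T G S).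

Definition Pl (x : T) := [set p : T * T | src G p.1 = rng G p.2 /\ gmul G p.1 p.2 = x].
Lemma convE f g x : conv f g x = \sum_(p \in Pl x) (f p.1 * g p.2).
Proof. by []. Qed.

Definition cind (c : S) (U : set T) : T -> S := fun x => if x \in U then c else 0.
Definition lsum (l : seq (S * set T)) : T -> S := fun x => \sum_(q <- l) cind q.1 q.2 x.

Definition rinj (U : set T) := forall a b, U a -> U b -> r a = r b -> a = b.
Definition sinj (U : set T) := forall a b, U a -> U b -> s a = s b -> a = b.

Lemma Pl_r x p : Pl x p -> r p.1 = r x.
Proof. by case=> H <-; rewrite rng_gmul. Qed.
Lemma Pl_s x p : Pl x p -> s p.2 = s x.
Proof. by case=> H <-; rewrite src_gmul. Qed.
Lemma Pl_2 x p : Pl x p -> p.2 = ginv G p.1 ** x.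
Proof. by case=> H <-; rewrite gVmulK. Qed.
Lemma Pl_1 x p : Pl x p -> p.1 = x ** ginv G p.2.
Proof. by case=> H <-; rewrite mulgVK. Qed.

Lemma mulVgK2 b x : s b = s x -> (x ** ginv G b) ** b = x.
Proof.
move=> bx; rewrite gmulA ?gmulVg ?bx ?gmul_src //.
  by rewrite rng_ginv.
by rewrite src_ginv.
Qed.

Lemma cind_ne0 c U x : cind c U x != 0 -> U x.
Proof. by rewrite /cind; case: ifPn => [/set_mem //|_]; rewrite eqxx. Qed.

Lemma mul_ne0l (a b : S) : a * b != 0 -> a != 0.
Proof. by apply: contra => /eqP ->; rewrite mul0r. Qed.
Lemma mul_ne0r (a b : S) : a * b != 0 -> b != 0.
Proof. by apply: contra => /eqP ->; rewrite mulr0. Qed.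

Lemma supp_lfin (l : seq (S * set T)) x : (forall q, q \in l -> rinj q.2) ->
  finite_set [set p | Pl x p /\ exists2 q, q \in l & q.2 p.1].
Proof.
elim: l => [|q l IH] H.
  apply: (@sub_finite_set _ _ set0); [by move=> p [_ [q]]|exact: finite_set0].
apply: (@sub_finite_set _ _ ([set p | Pl x p /\ q.2 p.1] `|`
                             [set p | Pl x p /\ exists2 q, q \in l & q.2 p.1])).
  move=> p [Pp [q' q'in q'p]]; move: q'in q'p; rewrite inE => /orP [/eqP -> q'p|q'l q'p].
    by left.
  by right; split => //; exists q'.
rewrite finite_setU; split.
  apply: subsing_fin => p p' [Pp Up] [Pp' Up'].
  have e1 : p.1 = p'.1.
    apply: (H q (mem_head _ _)) => //; by rewrite (Pl_r Pp) (Pl_r Pp').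
  move: (Pl_2 Pp) (Pl_2 Pp'); rewrite e1 => e2 e2'.
  by case: p p' e1 e2 e2' {Pp Up Pp' Up'} => a b [a' b'] /= -> -> ->.
apply: IH => q' q'l; apply: H; by rewrite inE q'l orbT.
Qed.

Lemma supp_rfin (l : seq (S * set T)) x : (forall q, q \in l -> sinj q.2) ->
  finite_set [set p | Pl x p /\ exists2 q, q \in l & q.2 p.2].
Proof.
elim: l => [|q l IH] H.
  apply: (@sub_finite_set _ _ set0); [by move=> p [_ [q]]|exact: finite_set0].
apply: (@sub_finite_set _ _ ([set p | Pl x p /\ q.2 p.2] `|`
                             [set p | Pl x p /\ exists2 q, q \in l & q.2 p.2])).
  move=> p [Pp [q' q'in q'p]]; move: q'in q'p; rewrite inE => /orP [/eqP -> q'p|q'l q'p].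
    by left.
  by right; split => //; exists q'.
rewrite finite_setU; split.
  apply: subsing_fin => p p' [Pp Up] [Pp' Up'].
  have e2 : p.2 = p'.2.
    apply: (H q (mem_head _ _)) => //; by rewrite (Pl_s Pp) (Pl_s Pp').
  move: (Pl_1 Pp) (Pl_1 Pp'); rewrite e2 => e1 e1'.
  by case: p p' e2 e1 e1' {Pp Up Pp' Up'} => a b [a' b'] /= -> -> ->.
apply: IH => q' q'l; apply: H; by rewrite inE q'l orbT.
Qed.

Lemma conv_lsum_l l g x : (forall q, q \in l -> rinj q.2) ->
  conv (lsum l) g x = \sum_(q <- l) conv (cind q.1 q.2) g x.
Proof.
move=> H; rewrite convE.
rewrite (eq_fsbigr (fun p => \sum_(q <- l) (cind q.1 q.2 p.1 * g p.2))); last first.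
  by move=> p _; rewrite /lsum mulr_suml.
apply: fsbig_sumseq (supp_lfin x H) _ => q p ql Pp /mul_ne0l /cind_ne0 Up.
by split => //; exists q.
Qed.

Lemma conv_lsum_r l g x : (forall q, q \in l -> sinj q.2) ->
  conv g (lsum l) x = \sum_(q <- l) conv g (cind q.1 q.2) x.
Proof.
move=> H; rewrite convE.
rewrite (eq_fsbigr (fun p => \sum_(q <- l) (g p.1 * cind q.1 q.2 p.2))); last first.
  by move=> p _; rewrite /lsum mulr_sumr.
apply: fsbig_sumseq (supp_rfin x H) _ => q p ql Pp /mul_ne0r /cind_ne0 Up.
by split => //; exists q.
Qed.
Lemma conv_cind_l_in c U hr g x : (forall a, U a -> hr (r a) = a) ->
  (r @` U) (r x) -> conv (cind c U) g x = c * g (ginv G (hr (r x)) ** x).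
Proof.
move=> hU rx.
have [Ua ra] := homeo_inv hU rx.
set a := hr (r x) in Ua ra *.
set p0 := (a, ginv G a ** x).
have P0 : Pl x p0.
  split => /=; last by rewrite mulVgK.
  by rewrite rng_gmul ?rng_ginv // src_ginv.
rewrite convE.
have -> : \sum_(p \in Pl x) (cind c U p.1 * g p.2) =
          \sum_(p \in [set p0]) (cind c U p.1 * g p.2).
  apply/esym/fsbig_widen; first by move=> p ->.
  move=> p [Pp np0]; rewrite /preimage /= /cind.
  case: ifPn => [/set_mem Up|_]; last by rewrite mul0r.
  exfalso; apply: np0.
  have e1 : p.1 = a by rewrite /a -(Pl_r Pp) hU.
  by rewrite (surjective_pairing p) (Pl_2 Pp) e1.
by rewrite fsbig_set1 /cind /= ifT // inE.
Qed.

Lemma conv_cind_l_out c U g x : ~ (r @` U) (r x) -> conv (cind c U) g x = 0.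
Proof.
move=> nrx; rewrite convE; apply: fsbig1 => p Pp; rewrite /cind.
case: ifPn => [/set_mem Up|_]; last by rewrite mul0r.
by exfalso; apply: nrx; exists p.1 => //; rewrite (Pl_r Pp).
Qed.

Lemma conv_cind_r_in c U hs g x : (forall b, U b -> hs (s b) = b) ->
  (s @` U) (s x) -> conv g (cind c U) x = g (x ** ginv G (hs (s x))) * c.
Proof.
move=> hU sx.
have [Ub sb] := homeo_inv hU sx.
set b := hs (s x) in Ub sb *.
set p0 := (x ** ginv G b, b).
have P0 : Pl x p0.
  split => /=; last by rewrite mulVgK2.
  by rewrite src_gmul ?src_ginv // rng_ginv.
rewrite convE.
have -> : \sum_(p \in Pl x) (g p.1 * cind c U p.2) =
          \sum_(p \in [set p0]) (g p.1 * cind c U p.2).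
  apply/esym/fsbig_widen; first by move=> p ->.
  move=> p [Pp np0]; rewrite /preimage /= /cind.
  case: ifPn => [/set_mem Up|_]; last by rewrite mulr0.
  exfalso; apply: np0.
  have e2 : p.2 = b by rewrite /b -(Pl_s Pp) hU.
  by rewrite (surjective_pairing p) (Pl_1 Pp) e2.
by rewrite fsbig_set1 /cind /= ifT // inE.
Qed.

Lemma conv_cind_r_out c U g x : ~ (s @` U) (s x) -> conv g (cind c U) x = 0.
Proof.
move=> nsx; rewrite convE; apply: fsbig1 => p Pp; rewrite /cind.
case: ifPn => [/set_mem Up|_]; last by rewrite mulr0.
by exfalso; apply: nsx; exists p.2 => //; rewrite (Pl_s Pp).
Qed.

Lemma conv_cind_cind c d U V hr x : (forall a, U a -> hr (r a) = a) ->
  conv (cind c U) (cind d V) x = cind (c * d) (bprod G U V) x.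
Proof.
move=> hU; case: (pselect ((r @` U) (r x))) => rx.
  rewrite (conv_cind_l_in _ _ hU rx).
  have [Ua ra] := homeo_inv hU rx.
  set a := hr (r x) in Ua ra *.
  rewrite /cind; case: ifPn => [/set_mem Vb|nV].
    rewrite ifT // inE; exists a, (ginv G a ** x); split => //.
      by rewrite rng_gmul ?rng_ginv // src_ginv.
    by rewrite mulVgK.
  rewrite ifF ?mulr0 //; apply/negP => /set_mem [a' [b' [Ua' Vb' ab' xe]]].
  move/negP: nV; apply; apply/mem_set.
  have e : a = a' by rewrite /a xe rng_gmul // hU.
  by rewrite e xe gVmulK.
rewrite conv_cind_l_out // /cind ifF //; apply/negP => /set_mem [a' [b' [Ua' Vb' ab' xe]]].
by apply: rx; exists a' => //; rewrite xe rng_gmul.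
Qed.

Local Notation cob := (compact_open_bisection G).

Lemma cob_hr B : cob B -> exists hr, forall a, B a -> hr (r a) = a.
Proof. by case/cob_unpack => _ _ _ [hr [H _]]; exists hr. Qed.
Lemma cob_hs B : cob B -> exists hs, forall a, B a -> hs (s a) = a.
Proof. by case/cob_unpack => _ _ [hs [H _]] _; exists hs. Qed.
Lemma cob_rinj B : cob B -> rinj B.
Proof. by case/cob_hr => hr H a b Ba Bb e; rewrite -(H a) // -(H b) // e. Qed.
Lemma cob_sinj B : cob B -> sinj B.
Proof. by case/cob_hs => hs H a b Ba Bb e; rewrite -(H a) // -(H b) // e. Qed.

Lemma conv_lsum_lsum l m : (forall q, q \in l -> cob q.2) ->
  (forall q, q \in m -> cob q.2) ->
  conv (lsum l) (lsum m) = lsum [seq (p.1 * q.1, bprod G p.2 q.2) | p <- l, q <- m].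
Proof.
move=> Hl Hm; apply: funext => x.
rewrite conv_lsum_l; last by move=> q /Hl /cob_rinj.
transitivity (\sum_(p <- l) \sum_(q <- m) conv (cind p.1 p.2) (cind q.1 q.2) x).
  by apply: eq_big_seq => p pl; apply: conv_lsum_r => q /Hm /cob_sinj.
rewrite /lsum big_allpairs_dep; apply: eq_big_seq => p pl; apply: eq_big_seq => q qm.
case: (cob_hr (Hl p pl)) => hr hU; exact: conv_cind_cind hU.
Qed.

Lemma stein_lsum f : @steinberg T G S f ->
  exists l, (forall q, q \in l -> cob q.2) /\ f = lsum l.
Proof. by case=> l [H ->]; exists l. Qed.

Lemma lsum_stein l : (forall q, q \in l -> cob q.2) -> @steinberg T G S (lsum l).
Proof. by move=> H; exists l. Qed.

Lemma stein_conv (Hprod : forall U V, cob U -> cob V -> cob (bprod G U V)) f g :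
  @steinberg T G S f -> @steinberg T G S g -> @steinberg T G S (conv f g).
Proof.
move=> /stein_lsum [l [Hl ->]] /stein_lsum [m [Hm ->]].
rewrite conv_lsum_lsum //; apply: lsum_stein => q /allpairsP [[p p'] [pl p'm ->]] /=.
by apply: Hprod; [apply: Hl|apply: Hm].
Qed.

Lemma stein_add f g :
  @steinberg T G S f -> @steinberg T G S g -> @steinberg T G S (sadd f g).
Proof.
move=> /stein_lsum [l [Hl ->]] /stein_lsum [m [Hm ->]].
have -> : sadd (lsum l) (lsum m) = lsum (l ++ m).
  by apply: funext => x; rewrite /sadd /lsum big_cat.
apply: lsum_stein => q; rewrite mem_cat => /orP [/Hl|/Hm] //.
Qed.

End Alg.

Section Eff.
Context {T : topologicalType} (G : groupoid T) (S : comNzSemiRingType).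
Local Notation s := (src G).
Local Notation r := (rng G).
Local Notation "a ** b" := (gmul G a b) (at level 40).
Local Notation X := (unit_space G).
Local Notation conv := (@steinberg_conv T G S).
Local Notation A := (@steinberg T G S).
Local Notation cob := (compact_open_bisection G).
Local Notation cind := (@cind T S).
Local Notation lsum := (@lsum T S).

Definition Fib x y := [set g : T | r g = x /\ s g = y].
Definition M (f : T -> S) x y := \sum_(g \in Fib x y) f g.

Lemma lsum_ne0 l g : lsum l g != 0 -> exists2 q, q \in l & q.2 g.
Proof.
move=> H; apply: contrapT => nE; move/eqP: H; apply.
apply: big1_seq => q /andP [_ ql]; rewrite /cind ifF //.
by apply/negP => /set_mem qg; apply: nE; exists q.
Qed.

Lemma fin_union (l : seq (S * set T)) (Z : set T -> set T) :
  (forall q, q \in l -> forall a b, Z q.2 a -> Z q.2 b -> a = b) ->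
  finite_set [set g | exists2 q, q \in l & Z q.2 g].
Proof.
elim: l => [|q l IH] H.
  apply: (@sub_finite_set _ _ set0); [by move=> g [q]|exact: finite_set0].
apply: (@sub_finite_set _ _ (Z q.2 `|` [set g | exists2 q, q \in l & Z q.2 g])).
  move=> g [q' q'in q'g]; move: q'in q'g; rewrite inE => /orP [/eqP -> ?|q'l q'g].
    by left.
  by right; exists q'.
rewrite finite_setU; split.
  by apply: subsing_fin; apply: H; exact: mem_head.
by apply: IH => q' q'l; apply: H; rewrite inE q'l orbT.
Qed.

Lemma stein_fib f x y : A f -> finite_set [set g | Fib x y g /\ f g != 0].
Proof.
move=> /stein_lsum [l [Hl ->]].
apply: (@sub_finite_set _ _ [set g | exists2 q, q \in l & (fun U => [set g | U g /\ r g = x]) q.2 g]).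
  move=> g [[rg _] /lsum_ne0 [q ql qg]]; by exists q.
apply: (fin_union (Z := fun U => [set g | U g /\ r g = x])) => q ql a b [Ua ra] [Ub rb].
by apply: (cob_rinj (Hl q ql)) => //; rewrite ra rb.
Qed.

Lemma M_add f1 f2 x y : A f1 -> A f2 -> M (sadd f1 f2) x y = M f1 x y + M f2 x y.
Proof.
move=> A1 A2; rewrite /M /sadd.
rewrite (@fsbig_add S T (Fib x y) ([set g | Fib x y g /\ f1 g != 0] `|` [set g | Fib x y g /\ f2 g != 0]) f1 f2) //.
- by rewrite finite_setU; split; apply: stein_fib.
- by move=> g Pg H; left.
- by move=> g Pg H; right.
Qed.

Lemma M0 x y : M (fun _ => 0) x y = 0.
Proof. by apply: fsbig1. Qed.

Lemma M_conv_l_in c U hr r1 x y : (forall a, U a -> hr (r a) = a) -> (r @` U) x ->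
  A r1 -> M (conv (cind c U) r1) x y = c * M r1 (s (hr x)) y.
Proof.
move=> hU rx Ar1.
have [Ua ra] := homeo_inv hU rx.
set a := hr x in Ua ra *.
rewrite /M (eq_fsbigr (fun g => c * r1 (ginv G a ** g))); last first.
  move=> g /set_mem [rg sg]; rewrite (conv_cind_l_in _ _ hU) ?rg //.
rewrite (reindex_fsbig (fun b => a ** b) (Fib (s a) y)); last first.
  split.
  - move=> b [rb sb]; split; first by rewrite rng_gmul // rb.
    by rewrite src_gmul // rb.
  - move=> b b' /set_mem [rb _] /set_mem [rb' _] e.
    by rewrite -(@gVmulK _ G a b) ?rb // e gVmulK // rb'.
  - move=> g [rg sg]; exists (ginv G a ** g).
      split; last by rewrite src_gmul // src_ginv ra rg.
      by rewrite rng_gmul ?rng_ginv // src_ginv ra rg.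
    by rewrite mulVgK // ra rg.
rewrite (eq_fsbigr (fun b => c * r1 b)); last first.
  by move=> b /set_mem [rb _]; rewrite gVmulK // rb.
by apply: (fsbig_mull (D := [set g | Fib (s a) y g /\ r1 g != 0])) => //; apply: stein_fib.
Qed.
Lemma M_conv_l_out c U r1 x y : ~ (r @` U) x -> M (conv (cind c U) r1) x y = 0.
Proof.
move=> nrx; apply: fsbig1 => g [rg _]; apply: conv_cind_l_out; by rewrite rg.
Qed.

Lemma M_conv_r_in c U hs r1 x y : (forall b, U b -> hs (s b) = b) -> (s @` U) y ->
  A r1 -> M (conv r1 (cind c U)) x y = M r1 x (r (hs y)) * c.
Proof.
move=> hU sy Ar1.
have [Ub sb] := homeo_inv hU sy.
set b := hs y in Ub sb *.
rewrite /M (eq_fsbigr (fun g => r1 (g ** ginv G b) * c)); last first.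
  move=> g /set_mem [rg sg]; rewrite (conv_cind_r_in _ _ hU) ?sg //.
rewrite (reindex_fsbig (fun z => z ** b) (Fib x (r b))); last first.
  split.
  - move=> z [rz sz]; split; first by rewrite rng_gmul // sz.
    by rewrite src_gmul // sz.
  - move=> z z' /set_mem [_ sz] /set_mem [_ sz'] e.
    by rewrite -(@mulgVK _ G z b) ?sz // e mulgVK // sz'.
  - move=> g [rg sg]; exists (g ** ginv G b).
      split; first by rewrite rng_gmul ?rng_ginv // sg sb.
      by rewrite src_gmul ?src_ginv // rng_ginv sg sb.
    by rewrite mulVgK2 // sb sg.
rewrite (eq_fsbigr (fun z => r1 z * c)); last first.
  by move=> z /set_mem [_ sz]; rewrite mulgVK // sz.
by apply: (fsbig_mulr (D := [set g | Fib x (r b) g /\ r1 g != 0])) => //; apply: stein_fib.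
Qed.

Lemma M_conv_r_out c U r1 x y : ~ (s @` U) y -> M (conv r1 (cind c U)) x y = 0.
Proof.
move=> nsy; apply: fsbig1 => g [_ sg]; apply: conv_cind_r_out; by rewrite sg.
Qed.

Lemma term_supp_l q r1 x y : A r1 -> cob q.2 ->
  exists2 D, finite_set D & forall g, Fib x y g -> conv (cind q.1 q.2) r1 g != 0 -> D g.
Proof.
move=> Ar1 /cob_hr [hr hU].
case: (pselect ((r @` q.2) x)) => rx; last first.
  exists set0; first exact: finite_set0.
  by move=> g [rg _]; rewrite conv_cind_l_out ?eqxx // rg.
have [Ua ra] := homeo_inv hU rx.
exists ((fun b => hr x ** b) @` [set b | Fib (s (hr x)) y b /\ r1 b != 0]).
  by apply: finite_image; apply: stein_fib.
move=> g [rg sg]; rewrite (conv_cind_l_in _ _ hU) ?rg // => /mul_ne0r' H.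
exists (ginv G (hr x) ** g); last by rewrite mulVgK // ra rg.
split => //; split.
  by rewrite rng_gmul ?rng_ginv // src_ginv ra rg.
by rewrite src_gmul // src_ginv ra rg.
Qed.

Lemma term_supp_r q r1 x y : A r1 -> cob q.2 ->
  exists2 D, finite_set D & forall g, Fib x y g -> conv r1 (cind q.1 q.2) g != 0 -> D g.
Proof.
move=> Ar1 /cob_hs [hs hU].
case: (pselect ((s @` q.2) y)) => sy; last first.
  exists set0; first exact: finite_set0.
  by move=> g [_ sg]; rewrite conv_cind_r_out ?eqxx // sg.
have [Ub sb] := homeo_inv hU sy.
exists ((fun z => z ** hs y) @` [set z | Fib x (r (hs y)) z /\ r1 z != 0]).
  by apply: finite_image; apply: stein_fib.
move=> g [rg sg]; rewrite (conv_cind_r_in _ _ hU) ?sg // => /mul_ne0l' H.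
exists (g ** ginv G (hs y)); last by rewrite mulVgK2 // sb sg.
split => //; split.
  by rewrite rng_gmul // rng_ginv sg sb.
by rewrite src_gmul ?src_ginv // rng_ginv sg sb.
Qed.

Lemma union_supp (l : seq (S * set T)) (Fq : S * set T -> T -> S) (P : set T) :
  (forall q, q \in l -> exists2 D, finite_set D & forall g, P g -> Fq q g != 0 -> D g) ->
  exists2 D, finite_set D & forall q g, q \in l -> P g -> Fq q g != 0 -> D g.
Proof.
elim: l => [|q l IH] H.
  by exists set0; [exact: finite_set0|].
case: (H q (mem_head _ _)) => D1 fD1 H1.
case: IH => [q' q'l|D2 fD2 H2]; first by apply: H; rewrite inE q'l orbT.
exists (D1 `|` D2); first by rewrite finite_setU.
move=> q' g; rewrite inE => /orP [/eqP ->|q'l] Pg Hg; first by left; apply: H1.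
by right; apply: H2 q'l Pg Hg.
Qed.

Lemma M_conv_lsum_l l r1 x y : A r1 -> (forall q, q \in l -> cob q.2) ->
  M (conv (lsum l) r1) x y = \sum_(q <- l) M (conv (cind q.1 q.2) r1) x y.
Proof.
move=> Ar1 Hl; rewrite /M.
rewrite (eq_fsbigr (fun g => \sum_(q <- l) conv (cind q.1 q.2) r1 g)); last first.
  by move=> g _; apply: conv_lsum_l => q /Hl /cob_rinj.
have [D fD HD] := @union_supp l (fun q g => conv (cind q.1 q.2) r1 g) (Fib x y)
  (fun q ql => term_supp_l x y Ar1 (Hl q ql)).
apply: (fsbig_sumseq fD) => q g ql Pg Hg; exact: (HD q g ql Pg Hg).
Qed.

Lemma M_conv_lsum_r l r1 x y : A r1 -> (forall q, q \in l -> cob q.2) ->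
  M (conv r1 (lsum l)) x y = \sum_(q <- l) M (conv r1 (cind q.1 q.2)) x y.
Proof.
move=> Ar1 Hl; rewrite /M.
rewrite (eq_fsbigr (fun g => \sum_(q <- l) conv r1 (cind q.1 q.2) g)); last first.
  by move=> g _; apply: conv_lsum_r => q /Hl /cob_sinj.
have [D fD HD] := @union_supp l (fun q g => conv r1 (cind q.1 q.2) g) (Fib x y)
  (fun q ql => term_supp_r x y Ar1 (Hl q ql)).
apply: (fsbig_sumseq fD) => q g ql Pg Hg; exact: (HD q g ql Pg Hg).
Qed.


Lemma M_compat t r1 r2 : A t -> A r1 -> A r2 ->
  (forall x y, M r1 x y = M r2 x y) ->
  (forall x y, M (conv t r1) x y = M (conv t r2) x y) /\
  (forall x y, M (conv r1 t) x y = M (conv r2 t) x y).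
Proof.
move=> /stein_lsum [l [Hl ->]] A1 A2 E; split => x y.
  rewrite !M_conv_lsum_l //; apply: eq_big_seq => q ql.
  case: (cob_hr (Hl q ql)) => hr hU.
  case: (pselect ((r @` q.2) x)) => rx.
    by rewrite !(M_conv_l_in _ _ hU rx) // E.
  by rewrite !M_conv_l_out.
rewrite !M_conv_lsum_r //; apply: eq_big_seq => q ql.
case: (cob_hs (Hl q ql)) => hs hU.
case: (pselect ((s @` q.2) y)) => sy.
  by rewrite !(M_conv_r_in _ _ hU sy) // E.
by rewrite !M_conv_r_out.
Qed.

Lemma M_cind c U x y u : sinj G U -> U u -> Fib x y u -> M (cind c U) x y = c.
Proof.
move=> sU Uu Fu; rewrite /M.
rewrite -(fsbig_widen [set u] (Fib x y)); first by rewrite fsbig_set1 /cind ifT // inE.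
  by move=> g ->.
move=> g [[rg sg] ngu]; rewrite /preimage /= /cind ifF //.
apply/negP => /set_mem Ug; apply: ngu; apply: sU => //.
by case: Fu => _ ->.
Qed.

Lemma M_cind0 c U x y : ~ (exists u, U u /\ Fib x y u) -> M (cind c U) x y = 0.
Proof.
move=> nE; apply: fsbig1 => g Fg; rewrite /cind ifF //.
by apply/negP => /set_mem Ug; apply: nE; exists g.
Qed.

End Eff.

Section Main.
Context {T : topologicalType} (G : groupoid T) (S : comNzSemiRingType).
Local Notation s := (src G).
Local Notation r := (rng G).
Local Notation "a ** b" := (gmul G a b) (at level 40).
Local Notation X := (unit_space G).
Local Notation conv := (@steinberg_conv T G S).
Local Notation A := (@steinberg T G S).
Local Notation cob := (compact_open_bisection G).
Local Notation cind := (@cind T S).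
Local Notation lsum := (@lsum T S).

Hypothesis Hamp : ample G.
Hypothesis Hcs : congruence_simple A (@sadd T S) conv.

Let Hs : local_homeo G s. Proof. by case: Hamp => _ _ _ _ []. Qed.
Let Hr : local_homeo G r. Proof. by case: Hamp => _ _ _ _ []. Qed.
Let Hmul : {within [set p : T * T | src G p.1 = rng G p.2],
   continuous (fun p : T * T => gmul G p.1 p.2)}.
Proof. by case: Hamp => -[]. Qed.
Let Hinv : continuous (ginv G). Proof. by case: Hamp => -[]. Qed.
Let Hlc : units_locally_compact G. Proof. by case: Hamp. Qed.
Let Hhaus : units_hausdorff G. Proof. by case: Hamp. Qed.
Let Htd : totally_disconnected X. Proof. by case: Hamp. Qed.
Let Hprod U V : cob U -> cob V -> cob (bprod G U V).
Proof. exact: (prod_cob Hs Hr Hmul Hinv Hhaus). Qed.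
Let oX : open X. Proof. exact: X_open Hs. Qed.

Lemma lsum1 c U : lsum [:: (c, U)] = cind c U.
Proof. by apply: funext => x; rewrite /lsum big_cons big_nil addr0. Qed.

Lemma A_cind c U : cob U -> A (cind c U).
Proof. by move=> cU; rewrite -lsum1; apply: lsum_stein => q; rewrite inE => /eqP ->. Qed.

Lemma A0 : A (fun _ => 0).
Proof.
have -> : (fun _ : T => 0 : S) = lsum [::] by apply: funext => x; rewrite /lsum big_nil.
by apply: lsum_stein.
Qed.

Lemma mk_cong (R : (T -> S) -> (T -> S) -> Prop) :
  (forall f, R f f) -> (forall f g, R f g -> R g f) ->
  (forall f g h, R f g -> R g h -> R f h) ->
  (forall t r1 r2, A t -> A r1 -> A r2 -> R r1 r2 ->
     [/\ R (sadd t r1) (sadd t r2), R (conv t r1) (conv t r2) & R (conv r1 t) (conv r2 t)]) ->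
  congruence A (@sadd T S) conv (fun f g => [/\ A f, A g & R f g]).
Proof.
move=> Rr Rs Rt Rc; split.
- by move=> x y [].
- by move=> x Ax; split.
- by move=> x y [? ? ?]; split => //; apply: Rs.
- by move=> x y z [? ? H1] [? ? H2]; split => //; exact: Rt H1 H2.
- move=> r1 r2 t At [A1 A2 R12]; have [Ra Rb Rc'] := Rc t r1 r2 At A1 A2 R12.
  split; split => //; solve [exact: stein_add | exact: stein_conv].
Qed.

Lemma simple_contra (R : (T -> S) -> (T -> S) -> Prop) :
  (forall f, R f f) -> (forall f g, R f g -> R g f) ->
  (forall f g h, R f g -> R g h -> R f h) ->
  (forall t r1 r2, A t -> A r1 -> A r2 -> R r1 r2 ->
     [/\ R (sadd t r1) (sadd t r2), R (conv t r1) (conv t r2) & R (conv r1 t) (conv r2 t)]) ->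
  (exists g1 g2, [/\ A g1, A g2 & ~ R g1 g2]) ->
  forall f1 f2, A f1 -> A f2 -> R f1 f2 -> f1 = f2.
Proof.
move=> Rr Rs Rt Rc [g1 [g2 [Ag1 Ag2 nR]]] f1 f2 A1 A2 R12.
case: (Hcs (mk_cong Rr Rs Rt Rc)) => [H|H].
  by case: (H g1 g2 Ag1 Ag2).
by apply: H.
Qed.

Lemma cind_in c U x : U x -> cind c U x = c.
Proof. by move=> Ux; rewrite /cind ifT // inE. Qed.
Lemma cind_out c U x : ~ U x -> cind c U x = 0.
Proof. by move=> Ux; rewrite /cind ifF //; apply/negP => /set_mem. Qed.

Lemma minimal : minimal_groupoid G.
Proof.
move=> D oiD invD.
case: (pselect (D = set0)) => [->|D0]; [by left|right].
apply: contrapT => DX.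
have DsubX : D `<=` X by case: oiD => O [_ ->] z [].
have oD : open D := open_in_X Hs oiD.
have [d Dd] : exists d, D d.
  apply: contrapT => nd; apply: D0; apply/seteqP; split => // z Dz; apply: nd; by exists z.
have [u [Xu nDu]] : exists u, X u /\ ~ D u.
  apply: contrapT => nu; apply: DX; apply/seteqP; split => // z Xz.
  by apply: contrapT => nDz; apply: nu; exists z.
have [C1 [cC1 C1d C1D C1X]] := unit_cob Hs Hr Hhaus Hlc Htd (DsubX _ Dd) oD Dd.
have [C2 [cC2 C2u _ C2X]] := unit_cob Hs Hr Hhaus Hlc Htd Xu openT I.
pose R := fun f g : T -> S => forall x, ~ D (s x) -> f x = g x.
have Rr : forall f, R f f by [].
have Rs : forall f g, R f g -> R g f by move=> f g Rfg x nDx; rewrite Rfg.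
have Rt : forall f g h, R f g -> R g h -> R f h by move=> f g h R1 R2 x nDx; rewrite R1 // R2.
have Rc : forall t r1 r2, A t -> A r1 -> A r2 -> R r1 r2 ->
     [/\ R (sadd t r1) (sadd t r2), R (conv t r1) (conv t r2) & R (conv r1 t) (conv r2 t)].
  move=> t r1 r2 /stein_lsum [l [Hl ->]] A1 A2 R12; split.
  + by move=> x nDx; rewrite /sadd R12.
  + move=> x nDx; rewrite !conv_lsum_l; try by move=> q /Hl /cob_rinj.
    apply: eq_big_seq => q ql; case: (cob_hr (Hl q ql)) => hr hU.
    case: (pselect ((r @` q.2) (r x))) => rx; last by rewrite !conv_cind_l_out.
    rewrite !(conv_cind_l_in _ _ hU rx) R12 //.
    have [_ ra] := homeo_inv hU rx.
    by rewrite src_gmul // src_ginv ra.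
  + move=> x nDx; rewrite !conv_lsum_r; try by move=> q /Hl /cob_sinj.
    apply: eq_big_seq => q ql; case: (cob_hs (Hl q ql)) => hs hU.
    case: (pselect ((s @` q.2) (s x))) => sx; last by rewrite !conv_cind_r_out.
    rewrite !(conv_cind_r_in _ _ hU sx) R12 //.
    have [_ sb] := homeo_inv hU sx.
    rewrite src_gmul ?src_ginv; last by rewrite rng_ginv sb.
    move=> Drb; apply: nDx; rewrite -sb -rng_ginv; apply: invD; by rewrite src_ginv.
have Rw : exists g1 g2, [/\ A g1, A g2 & ~ R g1 g2].
  exists (cind 1 C2), (fun _ => 0); split; [exact: A_cind|exact: A0|].
  move/(_ u); rewrite cind_in //.
  have -> : s u = u by [].
  by move=> /(_ nDu) /eqP; rewrite oner_eq0.
have R10 : R (cind 1 C1) (fun _ => 0).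
  move=> x nDx; apply: cind_out => C1x; apply: nDx.
  by have := C1X _ C1x; rewrite /unit_space /= => ->; apply: C1D.
have e := simple_contra Rr Rs Rt Rc Rw (A_cind 1 cC1) A0 R10.
have := congr1 (fun f => f d) e; rewrite /= cind_in //.
by move/eqP; rewrite oner_eq0.
Qed.

Lemma effective : effective_groupoid G.
Proof.
apply/seteqP; split; last first.
  move=> x Xx; rewrite /interior.
  have : nbhs x X by apply: open_nbhs_nbhs.
  by apply: nbhsS => z Xz; rewrite /isotropy /= unit_r.
move=> g0 Ig0; apply: contrapT => nXg0.
have [B [C [cB cC Bg0 BI [CX sB]]]] := iso_cob Hs Hr Hhaus Hlc Htd Ig0.
pose R := fun f g : T -> S => forall x y, M G f x y = M G g x y.
have Rr : forall f, R f f by [].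
have Rs : forall f g, R f g -> R g f by move=> f g Rfg x y; rewrite Rfg.
have Rt : forall f g h, R f g -> R g h -> R f h by move=> f g h R1 R2 x y; rewrite R1 R2.
have Rc : forall t r1 r2, A t -> A r1 -> A r2 -> R r1 r2 ->
     [/\ R (sadd t r1) (sadd t r2), R (conv t r1) (conv t r2) & R (conv r1 t) (conv r2 t)].
  move=> t r1 r2 At A1 A2 R12.
  have [H1 H2] := M_compat At A1 A2 R12.
  split => // x y; by rewrite !M_add // R12.
have sC : forall v, C v -> s v = v /\ r v = v.
  by move=> v /CX Xv; split => //; apply: unit_r.
have Rw : exists g1 g2, [/\ A g1, A g2 & ~ R g1 g2].
  exists (cind 1 C), (fun _ => 0); split; [exact: A_cind|exact: A0|].
  move/(_ (s g0) (s g0)); rewrite M0.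
  have Cs : C (s g0) by rewrite -sB; exists g0.
  rewrite (M_cind _ (cob_sinj cC) Cs).
    by move/eqP; rewrite oner_eq0.
  by have [E1 E2] := sC _ Cs; split.
have RBC : R (cind 1 B) (cind 1 C).
  move=> x y.
  case: (pselect (exists u, B u /\ Fib G x y u)) => [[u [Bu [ru su]]]|nB].
    rewrite (M_cind _ (cob_sinj cB) Bu) //.
    have Cs : C (s u) by rewrite -sB; exists u.
    have [E1 E2] := sC _ Cs.
    rewrite (M_cind _ (cob_sinj cC) Cs) //; split; first by rewrite E2 -ru BI.
    by rewrite E1.
  rewrite !M_cind0 // => -[v [Cv [rv sv]]]; apply: nB.
  move: Cv; rewrite -sB => -[b Bb bv].
  have [E1 E2] : s v = v /\ r v = v by apply: sC; rewrite -sB -bv; exists b.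
  exists b; split => //; split.
    by rewrite -BI // bv -rv E2.
  by rewrite bv -sv E1.
have e := simple_contra Rr Rs Rt Rc Rw (A_cind 1 cB) (A_cind 1 cC) RBC.
have := congr1 (fun f => f g0) e; rewrite /= cind_in // cind_out; last by move/CX.
by move/eqP; rewrite oner_eq0.
Qed.

Lemma semifield_part : semifield S -> (exists x, X x) ->
  is_field_semiring S \/ is_boolean_semifield S.
Proof.
move=> Hsf [x0 Xx0].
case: (pselect (exists a b : S, a + b = 0 /\ a != 0)) => [[a [b [ab a0]]]|nzs].
  left => x; case: (Hsf a a0) => a' aa'; exists (x * (a' * b)).
  transitivity (x * a' * (a + b)); last by rewrite ab mulr0.
  by rewrite mulrDr -!mulrA (mulrC a' a) aa' mulr1.
right.
have zsf : forall a b : S, (a + b == 0) = (a == 0) && (b == 0).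
  move=> a b; apply/idP/idP => [/eqP H|/andP [/eqP -> /eqP ->]]; last by rewrite addr0.
  have a0 : a = 0 by apply: contrapT => /eqP a0; apply: nzs; exists a, b.
  by move: H; rewrite a0 add0r => ->; rewrite eqxx.
have mul0 : forall a b : S, (a * b == 0) = (a == 0) || (b == 0).
  move=> a b; apply/idP/idP => [/eqP H|/orP [/eqP ->|/eqP ->]]; last 2 first.
  - by rewrite mul0r.
  - by rewrite mulr0.
  case: (boolP (a == 0)) => // a0 /=; case: (Hsf a a0) => a' aa'.
  by rewrite -[b]mul1r -aa' mulrC mulrA (mulrC b) H mul0r.
have sum0 : forall (I : eqType) (l : seq I) (F1 F2 : I -> S),
    (forall i, i \in l -> (F1 i == 0) = (F2 i == 0)) ->
    (\sum_(i <- l) F1 i == 0) = (\sum_(i <- l) F2 i == 0).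
  move=> I l F1 F2; elim: l => [|i l IH] H; first by rewrite !big_nil.
  rewrite !big_cons !zsf H ?mem_head // IH // => j jl.
  by apply: H; rewrite inE jl orbT.
have [C [cC Cx0 _ CX]] := unit_cob Hs Hr Hhaus Hlc Htd Xx0 openT I.
pose R := fun f g : T -> S => forall x, (f x == 0) = (g x == 0).
have Rr : forall f, R f f by [].
have Rs : forall f g, R f g -> R g f by move=> f g Rfg x; rewrite Rfg.
have Rt : forall f g h, R f g -> R g h -> R f h by move=> f g h R1 R2 x; rewrite R1 R2.
have Rc : forall t r1 r2, A t -> A r1 -> A r2 -> R r1 r2 ->
     [/\ R (sadd t r1) (sadd t r2), R (conv t r1) (conv t r2) & R (conv r1 t) (conv r2 t)].
  move=> t r1 r2 /stein_lsum [l [Hl ->]] A1 A2 R12; split.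
  + by move=> x; rewrite /sadd !zsf R12.
  + move=> x; rewrite !conv_lsum_l; try by move=> q /Hl /cob_rinj.
    apply: sum0 => q ql.
    case: (cob_hr (Hl q ql)) => hr hU.
    case: (pselect ((r @` q.2) (r x))) => rx; last by rewrite !conv_cind_l_out.
    by rewrite !(conv_cind_l_in _ _ hU rx) !mul0 R12.
  + move=> x; rewrite !conv_lsum_r; try by move=> q /Hl /cob_sinj.
    apply: sum0 => q ql.
    case: (cob_hs (Hl q ql)) => hs hU.
    case: (pselect ((s @` q.2) (s x))) => sx; last by rewrite !conv_cind_r_out.
    by rewrite !(conv_cind_r_in _ _ hU sx) !mul0 R12.
have Rw : exists g1 g2, [/\ A g1, A g2 & ~ R g1 g2].
  exists (cind 1 C), (fun _ => 0); split; [exact: A_cind|exact: A0|].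
  by move/(_ x0); rewrite cind_in // eqxx oner_eq0.
have all01 : forall a : S, a != 0 -> a = 1.
  move=> a a0.
  have Ra : R (cind a C) (cind 1 C).
    move=> x; case: (pselect (C x)) => Cx; first by rewrite !cind_in // oner_eq0 (negbTE a0).
    by rewrite !cind_out.
  have e := simple_contra Rr Rs Rt Rc Rw (A_cind a cC) (A_cind 1 cC) Ra.
  by have := congr1 (fun f => f x0) e; rewrite /= !cind_in.
exists (fun x : S => x != 0); split.
- exists (fun b : bool => if b then 1 else 0 : S).
    move=> x; case: (boolP (x == 0)) => [/eqP -> //|x0'] /=.
    by rewrite (all01 _ x0').
  by case => /=; rewrite ?oner_eq0 ?eqxx.
- by rewrite eqxx.
- by rewrite oner_eq0.
- by move=> x y; rewrite zsf negb_and.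
- by move=> x y; rewrite mul0 negb_or.
Qed.

End Main.

Unset Implicit Arguments.
Local Close Scope ring_scope.
Theorem proposition3p2 (T : topologicalType) (G : groupoid T)
  (S : comNzSemiRingType) :
  ample G -> (exists x, unit_space G x) -> semifield S ->
  congruence_simple (@steinberg T G S) (@sadd T S) (@steinberg_conv T G S) ->
  (is_field_semiring S \/ is_boolean_semifield S) /\ (minimal_groupoid G /\ effective_groupoid G).
Proof.
move=> Ha Hx Hsf Hcs; split; first exact: (semifield_part Ha Hcs Hsf Hx).
split; [exact: (minimal Ha Hcs) | exact: (effective Ha Hcs)].
Qed.
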